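(* Let $\Sigma$ be a finite alphabet with at least two letters. The automatic topology on $T_\Sigma^\omega$, i.e. the topology generated by the regular tree languages that are closed for the Cantor topology on $T_\Sigma^\omega$, is Polish.
   Context: $T_\Sigma^\omega$ is the set of maps $\{l,r\}^*\to\Sigma$ with the Cantor topology (distance $2^{-n}$, $n$ the least length of a node where two trees differ). A regular tree language is one accepted by a Muller tree automaton $(\Sigma,Q,q_0,\Delta,\mathcal{F})$ with $\Delta\subseteq Q\times\Sigma\times Q\times Q$, $\mathcal{F}\subseteq 2^Q$: a run $\rho:\{l,r\}^*\to Q$ satisfies $\rho(\text{root})=q_0$ and $(\rho(u),t(u),\rho(ul),\rho(ur))\in\Delta$, and is accepting if for each infinite branch the set of states occurring infinitely often on it is in $\mathcal{F}$. *)

(* Defs.v *)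
From Stdlib Require Import Reals List.
From mathcomp Require Import all_boot.
Set Implicit Arguments. Unset Strict Implicit. Unset Printing Implicit Defensive.

(* Nodes are words over {l,r}; l = false, r = true; the children of u are
   u l = rcons u false and u r = rcons u true; the root is [::]. *)
Definition node := seq bool.
Definition tree (Sigma : Type) := node -> Sigma.

Record muller (Sigma : finType) := Muller {
  mstate : finType;
  minit  : mstate;
  mdelta : mstate -> Sigma -> mstate -> mstate -> bool;
  macc   : {set {set mstate}}
}.

Definition branch_node (b : nat -> bool) (n : nat) : node := mkseq b n.

Definition is_run (Sigma : finType) (A : muller Sigma) (t : tree Sigma)
    (rho : node -> mstate A) : Prop :=
  rho [::] = @minit Sigma A /\
  forall u : node, @mdelta Sigma A (rho u) (t u) (rho (rcons u false)) (rho (rcons u true)).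

Definition inf_often (Q : Type) (rho : node -> Q) (b : nat -> bool) (q : Q) : Prop :=
  forall N : nat, exists n : nat, (N <= n)%N /\ rho (branch_node b n) = q.

Definition accepting (Sigma : finType) (A : muller Sigma) (rho : node -> mstate A) : Prop :=
  forall b : nat -> bool,
    exists S : {set mstate A}, S \in @macc Sigma A /\ (forall q, q \in S <-> inf_often rho b q).

Definition accepts (Sigma : finType) (A : muller Sigma) (t : tree Sigma) : Prop :=
  exists rho, @is_run Sigma A t rho /\ @accepting Sigma A rho.

Definition regular (Sigma : finType) (L : tree Sigma -> Prop) : Prop :=
  exists A : muller Sigma, forall t, L t <-> accepts A t.

(* Two trees agree on all nodes of length < n, i.e. their Cantor distance is < 2^{-(n-1)}. *)
Definition agree_upto (Sigma : Type) (n : nat) (t t' : tree Sigma) : Prop :=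
  forall u : node, (size u < n)%N -> t u = t' u.

Definition cantor_closed (Sigma : Type) (L : tree Sigma -> Prop) : Prop :=
  forall t, ~ L t -> exists n : nat, forall t', agree_upto n t t' -> ~ L t'.

(* Open sets of the topology generated by the family B (as a subbasis):
   unions of finite intersections of members of B. *)
Definition generated_open (X : Type) (B : (X -> Prop) -> Prop) (U : X -> Prop) : Prop :=
  forall x, U x -> exists l : list (X -> Prop),
    Forall B l /\ Forall (fun V => V x) l /\
    (forall y, Forall (fun V => V y) l -> U y).

Definition is_metric (X : Type) (d : X -> X -> R) : Prop :=
  (forall x y, Rle R0 (d x y)) /\
  (forall x y, d x y = R0 <-> x = y) /\
  (forall x y, d x y = d y x) /\
  (forall x y z, Rle (d x z) (Rplus (d x y) (d y z))).

Definition metric_open (X : Type) (d : X -> X -> R) (U : X -> Prop) : Prop :=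
  forall x, U x -> exists eps : R, Rlt R0 eps /\ forall y, Rlt (d x y) eps -> U y.

Definition cauchy (X : Type) (d : X -> X -> R) (s : nat -> X) : Prop :=
  forall eps : R, Rlt R0 eps -> exists N : nat,
    forall m n, (N <= m)%N -> (N <= n)%N -> Rlt (d (s m) (s n)) eps.

Definition converges_to (X : Type) (d : X -> X -> R) (s : nat -> X) (x : X) : Prop :=
  forall eps : R, Rlt R0 eps -> exists N : nat, forall n, (N <= n)%N -> Rlt (d (s n) x) eps.

Definition complete_metric (X : Type) (d : X -> X -> R) : Prop :=
  forall s, cauchy d s -> exists x, converges_to d s x.

Definition separable_metric (X : Type) (d : X -> X -> R) : Prop :=
  exists s : nat -> X, forall x (eps : R), Rlt R0 eps -> exists n, Rlt (d x (s n)) eps.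

Definition polish (X : Type) (is_open : (X -> Prop) -> Prop) : Prop :=
  exists d : X -> X -> R,
    is_metric d /\ (forall U, is_open U <-> metric_open d U) /\
    complete_metric d /\ separable_metric d.

Definition automatic_open (Sigma : finType) : (tree Sigma -> Prop) -> Prop :=
  generated_open (fun L : tree Sigma -> Prop => regular L /\ cantor_closed L).

(* Main.v *)
Require Import Defs.
From Stdlib Require Import Reals List ClassicalEpsilon FunctionalExtensionality PropExtensionality Classical Lra.
From mathcomp Require Import all_boot.
Set Implicit Arguments. Unset Strict Implicit. Unset Printing Implicit Defensive.

Definition pb (P : Prop) : bool := if excluded_middle_informative P then true else false.
Lemma pbP (P : Prop) : pb P <-> P.
Proof. rewrite /pb; case: excluded_middle_informative => //. Qed.

Lemma inf_often_inj (Q Q' : Type) (f : Q -> Q') (finj : injective f) rho b q :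
  inf_often (fun u => f (rho u)) b (f q) <-> inf_often rho b q.
Proof.
split=> H N; case: (H N) => n [Hn Hq]; exists n; split=> //; first exact: finj.
by rewrite Hq.
Qed.

Definition code (Sigma : finType) (n : nat) :=
  ('I_n * {ffun 'I_n * Sigma * 'I_n * 'I_n -> bool} * {set {set 'I_n}})%type.

Definition aut_of (Sigma : finType) n (a : code Sigma n) : muller Sigma :=
  @Muller Sigma 'I_n a.1.1 (fun p s q r => a.1.2 (p, s, q, r)) a.2.

Definition code_of (Sigma : finType) (A : muller Sigma) : code Sigma #|mstate A| :=
  (enum_rank (minit A),
   [ffun x : 'I_#|mstate A| * Sigma * 'I_#|mstate A| * 'I_#|mstate A| => let: (p, s, q, r) := x in
       @mdelta Sigma A (enum_val p) s (enum_val q) (enum_val r)],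
   [set enum_rank @: S | S : {set mstate A} in @macc Sigma A]).

Lemma code_ofP (Sigma : finType) (A : muller Sigma) t :
  accepts A t <-> accepts (aut_of (code_of A)) t.
Proof.
split.
- case=> rho [[Hi Hd] Ha].
  exists (fun u => enum_rank (rho u)); split; first split.
  + by rewrite /= Hi.
  + move=> u /=; rewrite ffunE !enum_rankK; exact: Hd.
  + move=> b; case: (Ha b) => S [HS HSq].
    exists (enum_rank @: S); split; first exact: imset_f.
    move=> q; rewrite -(enum_valK q) mem_imset; last exact: enum_rank_inj.
    rewrite inf_often_inj; last exact: enum_rank_inj.
    exact: HSq.
- case=> rho [[Hi Hd] Ha].
  exists (fun u => enum_val (rho u)); split; first split.
  + by rewrite Hi /= enum_rankK.
  + move=> u; move: (Hd u); by rewrite /= ffunE.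
  + move=> b; case: (Ha b) => S' [/imsetP [S HS ->] HSq].
    exists S; split=> // q.
    rewrite -(mem_imset _ _ (@enum_rank_inj _)) HSq.
    rewrite -(inf_often_inj (@enum_val_inj _ _)) enum_rankK.
    by [].
Qed.

Definition Flang (Sigma : finType) (k : nat) : tree Sigma -> Prop :=
  match (unpickle k : option (nat * nat)) with
  | Some (n, m) =>
      match (unpickle m : option (code Sigma n)) with
      | Some a => accepts (aut_of a)
      | None => fun _ => False
      end
  | None => fun _ => False
  end.

Lemma Flang_surj (Sigma : finType) (L : tree Sigma -> Prop) :
  regular L -> exists k, forall t, L t <-> @Flang Sigma k t.
Proof.
case=> A HA; exists (pickle (#|mstate A|, pickle (code_of A))) => t.
by rewrite /Flang !pickleK HA code_ofP.
Qed.

Definition cyl (Sigma : Type) (u : node) (a : Sigma) : tree Sigma -> Prop :=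
  fun t => t u = a.

Lemma cyl_closed (Sigma : Type) u (a : Sigma) : cantor_closed (cyl u a).
Proof.
move=> t Ht; exists (size u).+1 => t' Hag; rewrite /cyl -Hag //.
Qed.

Definition cylA (Sigma : finType) (u : node) (a : Sigma) : muller Sigma :=
 @Muller Sigma (option 'I_(size u).+1) (Some ord0)
  (fun p s q r => match p with
     | None => (q == None) && (r == None)
     | Some i => if (i < size u)%N then
          (if nth false u i then (q == None) && (omap val r == Some i.+1)
           else (omap val q == Some i.+1) && (r == None))
         else [&& s == a, q == None & r == None] end)
  [set: {set option 'I_(size u).+1}].

Lemma omap_val_insub n k :
  omap val (insub k : option 'I_n) = if (k < n)%N then Some k else None.
Proof.
case: insubP => [i Hi Hv | /negbTE ->] //=; by rewrite Hi Hv.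
Qed.

Lemma take_rcons_pref (v u : node) c :
  rcons v c = take (size v).+1 u -> v = take (size v) u.
Proof.
move=> H.
have : take (size v) (rcons v c) = take (size v) (take (size v).+1 u) by rewrite H.
by rewrite -cats1 take_size_cat // take_takel // leqnSn.
Qed.

Lemma cyl_regular (Sigma : finType) u (a : Sigma) : regular (cyl u a).
Proof.
exists (cylA u a) => t; split.
- move=> Ht.
  pose rho := fun v : node => if v == take (size v) u then (insub (size v) : option 'I_(size u).+1) else None.
  have Hrho : forall v, omap val (rho v) = if v == take (size v) u then Some (size v) else None.
    move=> v; rewrite /rho; case: eqP => [Hv|] //=.
    rewrite omap_val_insub ltnS; suff -> : (size v <= size u)%N by [].
    by rewrite Hv size_take_min geq_minr.
  exists rho; split; first split.
  + rewrite /rho /= take0 eqxx; case: insubP => [i _ Hi|] //; first by congr Some; exact: val_inj.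
  + move=> v /=.
    case Ep: (rho v) => [i|].
    * have : omap val (rho v) = Some (val i) by rewrite Ep.
      rewrite Hrho; case: eqP => [Hv|] //= [Hi].
      rewrite -Hi.
      case: ltnP => Hlt.
      -- have Ht2 := take_nth false Hlt.
         rewrite -Hv in Ht2.
         have Hother : forall c, c != nth false u (size v) -> rho (rcons v c) = None.
           move=> c Hc; rewrite /rho size_rcons Ht2; case: eqP => // /eqP.
           by rewrite eqseq_rcons eqxx /= (negbTE Hc).
         have Hsame : omap val (rho (rcons v (nth false u (size v)))) = Some (size v).+1.
           by rewrite Hrho size_rcons Ht2 eqxx.
         case Ed: (nth false u (size v)) Hsame Hother => Hsame Hother.
         ++ rewrite (Hother false) //=; apply/eqP; exact: Hsame.
         ++ rewrite (Hother true) // andbT; apply/eqP; exact: Hsame.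
      -- have Hvu : v = u.
           by rewrite Hv take_oversize.
         have Hch : forall c, rho (rcons v c) = None.
           move=> c; rewrite /rho; case: eqP => // Hc.
           have := congr1 size Hc; rewrite size_take size_rcons Hvu.
           by rewrite ltnNge leqnSn /= => /eqP; rewrite -[X in _ == X]addn0 -addn1 eqn_add2l.
         by rewrite !Hch Hvu Ht !eqxx.
    * have Hch : forall c, rho (rcons v c) = None.
        move=> c; rewrite /rho; case: eqP => // Hc.
        have Hc' : rcons v c = take (size v).+1 u by move: Hc; rewrite size_rcons.
        have Hv := take_rcons_pref Hc'.
        move: Ep; rewrite /rho -Hv eqxx => E.
        have := congr1 (omap val) E; rewrite omap_val_insub /=.
        have -> : (size v < (size u).+1)%N by rewrite ltnS Hv size_take_min geq_minr.
        by [].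
      by rewrite !Hch.
  + move=> b; exists [set q | pb (inf_often rho b q)]; split; first by rewrite inE.
    by move=> q; rewrite inE pbP.
- case=> rho [[Hi Hd] _].
  have Hpre : forall i, (i <= size u)%N -> exists j : 'I_(size u).+1, rho (take i u) = Some j /\ val j = i.
    elim=> [|i IH] Hle.
    + by exists ord0; rewrite take0.
    + case: (IH (ltnW Hle)) => j [Hj Hji].
      have Hlt : (i < size u)%N by [].
      rewrite (take_nth false Hlt).
      move: (Hd (take i u)); rewrite Hj /= Hji Hlt.
      case: (nth false u i) => /andP [H1 H2].
      * move/eqP: H2 => H.
        by case: (rho (rcons (take i u) true)) H => [k|] //= [Hk]; exists k.
      * move/eqP: H1 => H.
        by case: (rho (rcons (take i u) false)) H => [k|] //= [Hk]; exists k.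
  case: (Hpre (size u) (leqnn _)) => j [Hj Hji].
  move: (Hd (take (size u) u)); rewrite Hj /= Hji ltnn take_size.
  by case/and3P => /eqP.
Qed.

Open Scope R_scope.

Definition miss (Sigma : Type) (L : tree Sigma -> Prop) n (x : tree Sigma) : Prop :=
  forall t', agree_upto n x t' -> ~ L t'.

Definition lamL (Sigma : Type) (L : tree Sigma -> Prop) (x : tree Sigma) : option nat :=
  match excluded_middle_informative (exists n, pb (miss L n x)) with
  | left H => Some (ex_minn H)
  | right _ => None
  end.

Definition sig (Sigma : finType) (j : nat) (x : tree Sigma) : option (Sigma + option nat) :=
  match (unpickle j : option (node + nat)) with
  | Some (inl u) => Some (inl (x u))
  | Some (inr k) => Some (inr (if pb (regular (@Flang Sigma k) /\ cantor_closed (@Flang Sigma k))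
                               then lamL (@Flang Sigma k) x else None))
  | None => None
  end.

Definition tdist (Sigma : finType) (x y : tree Sigma) : R :=
  match excluded_middle_informative (exists j, sig j x != sig j y) with
  | left H => ((/2)^(ex_minn H))
  | right _ => 0
  end.

Lemma pow2_pos n : (0 < (/2)^n).
Proof. apply: pow_lt; lra. Qed.

Lemma halfpow_lt n k : (n < k)%N -> ((/2)^k < (/2)^n).
Proof.
elim: k => [//|k IH] Hk.
have Hp := pow2_pos k.
rewrite /= .
case: (ltngtP n k) => [Hnk|Hnk|Hnk].
- have := IH Hnk; lra.
- by rewrite ltnS leqNgt Hnk in Hk.
- subst; lra.
Qed.

Lemma pow2_lt m j : ((/2)^m < (/2)^j) <-> (j < m)%N.
Proof.
split; last exact: halfpow_lt.
move=> H; case: (ltngtP j m) => // Hjm.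
- have := halfpow_lt Hjm; lra.
- subst; lra.
Qed.

Lemma sig_ext (Sigma : finType) (x y : tree Sigma) :
  (forall j, sig j x = sig j y) -> x = y.
Proof.
move=> H; apply: functional_extensionality => u.
move: (H (pickle (inl u : node + nat))); rewrite /sig pickleK.
by case.
Qed.

Lemma dist_lt (Sigma : finType) (x y : tree Sigma) j :
  (tdist x y < (/2)^j) <-> (forall i, (i <= j)%N -> sig i x = sig i y).
Proof.
rewrite /tdist; case: excluded_middle_informative => [H|H].
- case: ex_minnP => m Hm Hmin; split.
  + move=> /pow2_lt Hlt i Hi; apply/eqP; apply/negPn/negP => Hne.
    have := Hmin _ Hne => Hmi.
    have := leq_ltn_trans Hi Hlt; by rewrite ltnNge Hmi.
  + move=> Hall; apply/pow2_lt; rewrite ltnNge; apply/negP => Hmj.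
    by move: Hm; rewrite Hall // eqxx.
- split=> _; last exact: pow2_pos.
  move=> i _; apply/eqP; apply/negPn/negP => Hne; apply: H; by exists i.
Qed.

Lemma dist_cases (Sigma : finType) (x y : tree Sigma) :
  (tdist x y = 0 /\ forall i, sig i x = sig i y) \/
  exists m, tdist x y = ((/2)^m) /\ sig m x <> sig m y /\
            forall i, (i < m)%N -> sig i x = sig i y.
Proof.
rewrite /tdist; case: excluded_middle_informative => [H|H].
- case: ex_minnP => m Hm Hmin; right; exists m; split=> //; split; first exact/eqP.
  move=> i Hi; apply/eqP; apply/negPn/negP => Hne.
  have := Hmin _ Hne; by rewrite leqNgt Hi.
- left; split=> // i; apply/eqP; apply/negPn/negP => Hne; apply: H; by exists i.
Qed.

Lemma dist_ge0 (Sigma : finType) (x y : tree Sigma) : (0 <= tdist x y).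
Proof.
case: (dist_cases x y) => [[-> _]|[m [-> _]]]; first lra.
have := pow2_pos m; lra.
Qed.

Lemma dist_sym (Sigma : finType) (x y : tree Sigma) : tdist x y = tdist y x.
Proof.
case: (dist_cases x y) => [[E1 H1]|[m [E1 [N1 H1]]]];
case: (dist_cases y x) => [[E2 H2]|[m' [E2 [N2 H2]]]].
- by rewrite E1 E2.
- by case: N2; rewrite H1.
- by case: N1; rewrite H2.
- rewrite E1 E2; case: (ltngtP m m') => Hmm //.
  + by case: N1; rewrite H2.
  + by case: N2; rewrite H1.
  + by subst.
Qed.

Lemma dist_zero (Sigma : finType) (x y : tree Sigma) : tdist x y = 0 <-> x = y.
Proof.
split.
- move=> H; apply: sig_ext => i.
  have : (tdist x y < (/2)^i) by rewrite H; exact: pow2_pos.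
  by move/dist_lt; apply.
- move=> <-; case: (dist_cases x x) => [[-> _]|[m [_ [N _]]]] //.
Qed.

Lemma dist_tri (Sigma : finType) (x y z : tree Sigma) :
  (tdist x z <= tdist x y + tdist y z).
Proof.
have Hxy := dist_ge0 x y; have Hyz := dist_ge0 y z.
case: (dist_cases x z) => [[-> _]|[m [E [N _]]]]; first lra.
rewrite E.
case: (Rlt_le_dec (tdist x y) ((/2)^m)) => H1; last lra.
case: (Rlt_le_dec (tdist y z) ((/2)^m)) => H2; last lra.
case: N; move/dist_lt: H1 => ->//; move/dist_lt: H2 => ->//.
Qed.

Lemma dist_metric (Sigma : finType) : is_metric (@tdist Sigma).
Proof.
split; first exact: dist_ge0.
split; first exact: dist_zero.
split; first exact: dist_sym.
exact: dist_tri.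
Qed.

Close Scope R_scope.

Lemma agree_refl (S : Type) n (x : tree S) : agree_upto n x x.
Proof. by []. Qed.
Lemma agree_sym (S : Type) n (x y : tree S) : agree_upto n x y -> agree_upto n y x.
Proof. by move=> H u Hu; rewrite H. Qed.
Lemma agree_trans (S : Type) n (x y z : tree S) :
  agree_upto n x y -> agree_upto n y z -> agree_upto n x z.
Proof. by move=> H1 H2 u Hu; rewrite H1 // H2. Qed.
Lemma agree_le (S : Type) m n (x y : tree S) :
  (m <= n)%N -> agree_upto n x y -> agree_upto m x y.
Proof. move=> Hmn H u Hu; apply: H; exact: leq_trans Hu Hmn. Qed.

Lemma miss_agree (S : Type) (L : tree S -> Prop) n x y :
  agree_upto n x y -> miss L n x -> miss L n y.
Proof. move=> Ha Hm t' Ht'; apply: Hm; exact: agree_trans Ha Ht'. Qed.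

Lemma lam_none_in (S : Type) (L : tree S -> Prop) x : L x -> lamL L x = None.
Proof.
move=> Hx; rewrite /lamL; case: excluded_middle_informative => // H; exfalso; case: H => n /pbP Hn.
by case: (Hn x (@agree_refl _ _ x)).
Qed.

Lemma lam_none_out (S : Type) (L : tree S -> Prop) x :
  cantor_closed L -> lamL L x = None -> L x.
Proof.
move=> Hc; rewrite /lamL; case: excluded_middle_informative => // H _.
apply: NNPP => Hx; case: (Hc x Hx) => n Hn; apply: H; exists n; exact/pbP.
Qed.

Lemma lam_some (S : Type) (L : tree S -> Prop) x N :
  lamL L x = Some N -> miss L N x /\ forall n, (n < N)%N -> ~ miss L n x.
Proof.
rewrite /lamL; case: excluded_middle_informative => // H.
case: ex_minnP => m /pbP Hm Hmin [<-]; split=> // n Hn /pbP Hmn.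
by have := Hmin _ Hmn; rewrite leqNgt Hn.
Qed.

Lemma lam_agree (S : Type) (L : tree S -> Prop) x y N :
  lamL L x = Some N -> agree_upto N x y -> lamL L y = Some N.
Proof.
move=> /lam_some [HN Hlt] Ha.
have HNy : miss L N y by exact: miss_agree Ha HN.
have Hlty : forall n, (n < N)%N -> ~ miss L n y.
  move=> n Hn Hm; apply: (Hlt n Hn); apply: miss_agree Hm.
  apply: agree_sym; apply: agree_le Ha; exact: ltnW.
rewrite /lamL; case: excluded_middle_informative => [H|H]; last first.
  by case: H; exists N; exact/pbP.
case: ex_minnP => m /pbP Hm Hmin; congr Some.
have HmN : (m <= N)%N by apply: Hmin; exact/pbP.
case: (ltngtP m N) => // Hmn; [by case: (Hlty m Hmn) | by rewrite leqNgt Hmn in HmN].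
Qed.

Definition nodes_upto (N : nat) : seq node :=
  flatten [seq [seq tval w | w <- enum {: k.-tuple bool}] | k <- iota 0 N].

Lemma mem_nodes_upto u N : (size u < N)%N -> u \in nodes_upto N.
Proof.
move=> Hu; apply/flattenP.
exists [seq tval w | w <- enum {: (size u).-tuple bool}].
  by apply: (map_f (fun k => [seq tval w | w <- enum {: k.-tuple bool}])); rewrite mem_iota.
have -> : u = tval (in_tuple u) by [].
by apply: map_f; rewrite mem_enum.
Qed.

Lemma Forall_map_in (A : eqType) (B : Type) (P : B -> Prop) (f : A -> B) (s : seq A) :
  (forall a, a \in s -> P (f a)) -> Forall P (map f s).
Proof.
elim: s => [|a s IH] H /=; first by constructor.
constructor; first by apply: H; rewrite in_cons eqxx.
by apply: IH => b Hb; apply: H; rewrite in_cons Hb orbT.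
Qed.

Lemma Forall_map_out (A : eqType) (B : Type) (P : B -> Prop) (f : A -> B) (s : seq A) :
  Forall P (map f s) -> forall a, a \in s -> P (f a).
Proof.
elim: s => [|a s IH] //= H b; inversion H; subst.
rewrite in_cons => /orP [/eqP -> //|Hb]; exact: IH.
Qed.

Definition cyl_list (Sigma : Type) N (x : tree Sigma) : list (tree Sigma -> Prop) :=
  map (fun u => cyl u (x u)) (nodes_upto N).

Definition Bsub (Sigma : finType) (L : tree Sigma -> Prop) := regular L /\ cantor_closed L.

Lemma cyl_list_spec (Sigma : finType) N (x : tree Sigma) :
  Forall (@Bsub Sigma) (cyl_list N x) /\ Forall (fun V => V x) (cyl_list N x) /\
  forall y, Forall (fun V => V y) (cyl_list N x) -> agree_upto N x y.
Proof.
split; first by apply: Forall_map_in => u _; split; [exact: cyl_regular | exact: cyl_closed].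
split; first by apply: Forall_map_in.
move=> y Hy u Hu; have := Forall_map_out Hy (mem_nodes_upto Hu).
by rewrite /cyl => ->.
Qed.

Lemma test_list (Sigma : finType) i (x : tree Sigma) :
  exists l, Forall (@Bsub Sigma) l /\ Forall (fun V => V x) l /\
  forall y, Forall (fun V => V y) l -> sig i x = sig i y.
Proof.
rewrite /sig; case: (unpickle i) => [[u|k]|]; last by exists nil.
- exists [:: cyl u (x u)]; split; first by constructor; [split; [exact: cyl_regular|exact: cyl_closed]|constructor].
  split; first by constructor.
  by move=> y Hy; inversion Hy; subst; rewrite /cyl in H1; rewrite H1.
- case E: (pb _); last by exists nil.
  move/pbP: E => [Hr Hc].
  case: (classic (Flang k x)) => Hx.
  + exists [:: @Flang Sigma k]; split; first by constructor.
    split; first by constructor.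
    move=> y Hy; inversion Hy; subst.
    by rewrite !lam_none_in.
  + case E: (lamL (@Flang Sigma k) x) => [N|]; last by case: Hx; exact: lam_none_out E.
    case: (cyl_list_spec N x) => H1 [H2 H3].
    exists (cyl_list N x); split=> //; split=> // y Hy.
    by rewrite (lam_agree E (H3 y Hy)).
Qed.

Lemma Forall_cat (A : Type) (P : A -> Prop) (l1 l2 : seq A) :
  Forall P (l1 ++ l2) <-> Forall P l1 /\ Forall P l2.
Proof.
elim: l1 => [|a l1 IH] /=; first by split; [move=> H; split; [constructor|]|case].
split.
- move=> H; inversion H; subst; case/IH: H3 => H3 H4; split=> //; by constructor.
- case=> H1 H2; inversion H1; subst; constructor=> //; exact/IH.
Qed.

Lemma ball_list (Sigma : finType) j (x : tree Sigma) :
  exists l, Forall (@Bsub Sigma) l /\ Forall (fun V => V x) l /\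
  forall y, Forall (fun V => V y) l -> forall i, (i <= j)%N -> sig i x = sig i y.
Proof.
elim: j => [|j [l [H1 [H2 H3]]]].
- case: (test_list 0 x) => l [H1 [H2 H3]]; exists l; split=> //; split=> // y Hy i.
  by rewrite leqn0 => /eqP ->; apply: H3.
- case: (test_list j.+1 x) => l' [H1' [H2' H3']].
  exists (l ++ l'); split; first exact/Forall_cat.
  split; first exact/Forall_cat.
  move=> y /Forall_cat [Hy Hy'] i; rewrite leq_eqVlt => /orP [/eqP ->|Hi].
  + exact: H3'.
  + exact: H3.
Qed.

Open Scope R_scope.

Lemma small_pow eps : 0 < eps -> exists j, (/2)^j < eps.
Proof.
move=> Heps; case: (pow_lt_1_zero (/2) _ eps Heps) => [|N HN].
  rewrite Rabs_pos_eq; lra.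
exists N; have := HN N (le_n N); rewrite Rabs_pos_eq //; left; exact: pow2_pos.
Qed.

Lemma list_index (Sigma : finType) (l : list (tree Sigma -> Prop)) x :
  Forall (@Bsub Sigma) l -> Forall (fun V => V x) l ->
  exists J, forall y, (forall i, (i <= J)%N -> sig i x = sig i y) -> Forall (fun V => V y) l.
Proof.
elim: l => [|V l IH] H1 H2; first by exists 0%N => y _; constructor.
inversion H1; inversion H2; subst.
case: (IH H4 H8) => J HJ.
case: H3 => Hr Hcl.
case: (Flang_surj Hr) => k Hk.
have EV : V = @Flang Sigma k.
  by apply: functional_extensionality => t; apply: propositional_extensionality; exact: Hk.
subst V.
exists (maxn (pickle (inr k : node + nat)) J) => y Hy; constructor; last first.
  by apply: HJ => i Hi; apply: Hy; rewrite leq_max Hi orbT.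
have := Hy (pickle (inr k : node + nat)); rewrite leq_max leqnn /sig pickleK => /(_ isT).
have Hg : pb (regular (@Flang Sigma k) /\ cantor_closed (@Flang Sigma k)) by apply/pbP.
rewrite Hg (lam_none_in H7) => -[] /esym; exact: lam_none_out.
Qed.

Lemma eventually_all (P : nat -> nat -> Prop) j :
  (forall i, exists M, forall m, (M <= m)%N -> P i m) ->
  exists M, forall m, (M <= m)%N -> forall i, (i <= j)%N -> P i m.
Proof.
move=> H; elim: j => [|j [M HM]].
- case: (H 0%N) => M HM; exists M => m Hm i; rewrite leqn0 => /eqP ->; exact: HM.
- case: (H j.+1) => M' HM'; exists (maxn M M') => m Hm i.
  rewrite leq_eqVlt => /orP [/eqP ->|Hi].
  + apply: HM'; apply: leq_trans Hm; exact: leq_maxr.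
  + apply: HM; [apply: leq_trans Hm; exact: leq_maxl | exact: Hi].
Qed.

Lemma eventually_seq (A : eqType) (P : A -> nat -> Prop) (s : seq A) :
  (forall a, a \in s -> exists M, forall m, (M <= m)%N -> P a m) ->
  exists M, forall m, (M <= m)%N -> forall a, a \in s -> P a m.
Proof.
elim: s => [|a s IH] H; first by exists 0%N.
case: IH => [b Hb|M HM]; first by apply: H; rewrite in_cons Hb orbT.
case: (H a); first by rewrite in_cons eqxx.
move=> M' HM'; exists (maxn M M') => m Hm b; rewrite in_cons => /orP [/eqP ->|Hb].
- apply: HM'; apply: leq_trans Hm; exact: leq_maxr.
- apply: HM; [apply: leq_trans Hm; exact: leq_maxl | exact: Hb].
Qed.

Lemma dist_complete (Sigma : finType) : complete_metric (@tdist Sigma).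
Proof.
move=> s Hs.
have Hc : forall i, exists M, forall m, (M <= m)%N -> sig i (s m) = sig i (s M).
  move=> i; case: (Hs _ (pow2_pos i)) => N HN; exists N => m Hm.
  by move/dist_lt: (HN m N Hm (leqnn N)); apply.
pose Mf i := proj1_sig (constructive_indefinite_description _ (Hc i)).
have HMf : forall i m, (Mf i <= m)%N -> sig i (s m) = sig i (s (Mf i)).
  move=> i; exact: (proj2_sig (constructive_indefinite_description _ (Hc i))).
pose t := fun u => s (Mf (pickle (inl u : node + nat))) u.
have Hnode : forall u m, (Mf (pickle (inl u : node + nat)) <= m)%N -> s m u = t u.
  move=> u m Hm; have := HMf _ m Hm; rewrite /sig pickleK; by case.
have Hagree : forall N, exists M, forall m, (M <= m)%N -> agree_upto N (s m) t.
  move=> N; case: (@eventually_seq _ (fun u m => s m u = t u) (nodes_upto N)).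
    by move=> u _; exists (Mf (pickle (inl u : node + nat))); exact: Hnode.
  move=> M HM; exists M => m Hm u Hu; apply: (HM m Hm u); exact: mem_nodes_upto.
have Hsig : forall i, exists M, forall m, (M <= m)%N -> sig i (s m) = sig i t.
  move=> i; have HM := HMf i.
  rewrite /sig in HM *; case E: (unpickle i) HM => [[u|k]|] HM; last by exists 0%N.
  - exists (Mf (pickle (inl u : node + nat))) => m Hm; by rewrite (Hnode u m Hm).
  - case G: (pb (regular (@Flang Sigma k) /\ cantor_closed (@Flang Sigma k))) HM => HM;
      last by exists 0%N.
    move/pbP: G => [Hr Hcl].
    have HM' : forall m, (Mf i <= m)%N -> lamL (@Flang Sigma k) (s m) = lamL (@Flang Sigma k) (s (Mf i)).
      by move=> m Hm; case: (HM m Hm).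
    exists (Mf i) => m Hm; rewrite (HM' m Hm); congr (Some (inr _)).
    case E2: (lamL (@Flang Sigma k) (s (Mf i))) => [N|].
    + case: (Hagree N) => M' HM''.
      have : lamL (@Flang Sigma k) (s (maxn (Mf i) M')) = Some N by rewrite HM' ?leq_maxl.
      move/lam_agree => H; symmetry; apply: H; apply: HM''; exact: leq_maxr.
    + symmetry; apply: lam_none_in; apply: NNPP => Ht.
      case: (Hcl t Ht) => n Hn; case: (Hagree n) => M' HM''.
      have Hin : @Flang Sigma k (s (maxn (Mf i) M')).
        by apply: (lam_none_out Hcl); rewrite HM' ?leq_maxl.
      apply: (Hn (s (maxn (Mf i) M'))) Hin; apply: agree_sym; apply: HM''; exact: leq_maxr.
exists t => eps Heps; case: (small_pow Heps) => j Hj.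
case: (@eventually_all (fun i m => sig i (s m) = sig i t) j Hsig) => M HM.
exists M => n Hn; apply: Rlt_trans Hj; apply/dist_lt => i Hi; exact: HM.
Qed.

Lemma dist_separable (Sigma : finType) (sigma0 : Sigma) : separable_metric (@tdist Sigma).
Proof.
pose t0 : tree Sigma := fun _ => sigma0.
pose pick (c : seq (option (Sigma + option nat))) : tree Sigma :=
  match excluded_middle_informative
          (exists y, forall i, (i < size c)%N -> sig i y = nth None c i) with
  | left H => proj1_sig (constructive_indefinite_description _ H)
  | right _ => t0
  end.
exists (fun n => match (unpickle n : option (seq (option (Sigma + option nat)))) with
                 | Some c => pick c | None => t0 end).
move=> x eps Heps; case: (small_pow Heps) => j Hj.
pose c := [seq sig i x | i <- iota 0 j.+1].
exists (pickle c); rewrite pickleK.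
have Hc : forall i, (i < size c)%N -> sig i x = nth None c i.
  move=> i; rewrite size_map size_iota => Hi; by rewrite (nth_map 0%N) ?size_iota // nth_iota.
apply: Rlt_trans Hj; apply/dist_lt => i Hi.
rewrite /pick; case: excluded_middle_informative => [H|H]; last first.
  by case: H; exists x.
case: (constructive_indefinite_description _ H) => y Hy /=.
by rewrite Hc ?Hy // size_map size_iota ltnS.
Qed.

Theorem mainTheorem13 (Sigma : finType) (hSigma : (1 < #|Sigma|)%N) :
  polish (@automatic_open Sigma).
Proof.
have : (0 < #|Sigma|)%N by exact: ltnW.
case/card_gt0P => sigma0 _.
exists (@tdist Sigma); split; first exact: dist_metric.
split; last by split; [exact: dist_complete | exact: dist_separable sigma0].
move=> U; split.
- move=> HU x Ux; case: (HU x Ux) => l [Hl [Hlx Hly]].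
  case: (list_index Hl Hlx) => J HJ.
  exists ((/2)^J); split; first exact: pow2_pos.
  move=> y Hd; apply: Hly; apply: HJ; exact/dist_lt.
- move=> HU x Ux; case: (HU x Ux) => eps [Heps H].
  case: (small_pow Heps) => j Hj.
  case: (ball_list j x) => l [H1 [H2 H3]]; exists l; split=> //; split=> // y Hy.
  apply: H; apply: Rlt_trans Hj; apply/dist_lt; exact: H3.
Qed.
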